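(* In the hierarchical partition construction described in the context, let $A$ be any set occurring in some partition $\mathcal S_j$, and let $a_1$ be the largest level $j$ with $A\in\mathcal S_j$. Then the number of sets $B\neq A$ for which there exists a level $j$ with $A,B\in\mathcal S_j$ and $A$ knows $B$ at level $j$, and such that $A$ is responsible for the pair (i.e. $a_1\le b_1$, where $b_1$ is the largest level with $B\in\mathcal S_{b_1}$), is at most $\lambda^{3+\eta}$.
   Context: Let $(V,d)$ be a finite metric space with $|V|\ge 2$ which is doubling with constant $\lambda$: for every $v\in V$ and $r>0$ the open ball $B_{2r}(v)=\{u:d(u,v)<2r\}$ is contained in the union of at most $\lambda$ open balls $B_r(w)$, $w\in V$. Fix an integer $\eta\ge2$ and a real $\tau$ with $1+\frac{1}{2^{\eta-1}-1}\le\tau\le 2^{\eta}$. For $L\subseteq V$ and $r>0$, a greedy partition of $L$ with parameter $r$ is obtained by: set $L_0=L$; while $L_i\ne\emptyset$ choose any $v_i\in L_i$, let $P_i=\{u\in L_i: d(u,v_i)<2^{-\eta-1}r\}$ with leader $v_i$, and set $L_{i+1}=L_i\setminus P_i$. Hierarchical partition construction: choose $r_0$ with $0<r_0<\min_{u\ne v}d(u,v)$ and put $r_j=\tau^j r_0$. Let $\mathcal S_0=\{\{v\}:v\in V\}$, the leader of $\{v\}$ being $v$. While $\mathcal S_j$ has more than one element: let $L_j$ be the set of leaders of the sets in $\mathcal S_j$, let $\mathcal S'_{j+1}$ be a greedy partition of $L_j$ with parameter $2r_{j+1}$, and let $\mathcal S_{j+1}$ consist, for each $P\in\mathcal S'_{j+1}$,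 of the set $\bigcup\{S\in\mathcal S_j:\mathrm{leader}(S)\in P\}$, whose leader is defined to be the leader of $P$. Each $\mathcal S_j$ is a partition of $V$ and $\mathcal S_j$ refines $\mathcal S_{j+1}$, so a set occurs in a contiguous range of levels. For $S,S'\in\mathcal S_j$, $S$ knows $S'$ (at level $j$) if there are $v\in S$, $u\in S'$ with $d(v,u)<r_j$. *)

(* Defs.v *)
From HB Require Import structures.
From mathcomp Require Import all_boot all_order all_algebra.
Set Implicit Arguments. Unset Strict Implicit. Unset Printing Implicit Defensive.
Import Order.TTheory GRing.Theory Num.Theory.
Local Open Scope ring_scope.

Section Defs.
Variables (R : realFieldType) (V : finType) (d : V -> V -> R).

Definition is_metric : Prop :=
  [/\ forall u v, 0 <= d u v,
      forall u v, (d u v == 0) = (u == v),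
      forall u v, d u v = d v u &
      forall u v w, d u w <= d u v + d v w].

Definition doubling (lam : nat) : Prop :=
  forall (v : V) (r : R), 0 < r ->
    exists W : {set V}, (#|W| <= lam)%N /\
      forall u, d u v < 2 * r -> exists2 w, w \in W & d u w < r.

(* One run of the greedy partition with threshold c (= 2^{-eta-1} r) driven by
   the sequence of chosen leaders vs.  Returns the list of (part, leader)
   pairs, or None if vs is not a legal sequence of choices. *)
Fixpoint greedy_run (L : {set V}) (c : R) (vs : seq V)
  : option (seq ({set V} * V)) :=
  match vs with
  | [::] => if L == set0 then Some [::] else None
  | v :: vs' =>
      if v \in L then
        let P := [set u in L | d u v < c] in
        omap (cons (P, v)) (greedy_run (L :\: P) c vs')
      else None
  end.

Definition rad (tau r0 : R) (j : nat) : R := tau ^+ j * r0.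

Definition leaders (S : nat -> {set {set V}}) (ldr : nat -> {set V} -> V)
  (j : nat) : {set V} := [set ldr j X | X in S j].

(* The hierarchical partition construction, levels 0..m.
   S j is the partition S_j, ldr j X the leader of X in S_j. *)
Definition hier_partition (eta : nat) (tau r0 : R) (m : nat)
  (S : nat -> {set {set V}}) (ldr : nat -> {set V} -> V) : Prop :=
  [/\ S 0%N = [set [set v] | v : V],
      (forall v : V, ldr 0%N [set v] = v),
      (forall j, (j < m)%N ->
         (1 < #|S j|)%N /\
         exists vs ps,
           greedy_run (leaders S ldr j)
             ((2 ^+ eta.+1)^-1 * (2 * rad tau r0 j.+1)) vs = Some ps /\
           S j.+1 = [set:: [seq \bigcup_(X in S j | ldr j X \in p.1) X | p : {set V} * V <- ps]] /\
           (forall p : {set V} * V, p \in ps ->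
              ldr j.+1 (\bigcup_(X in S j | ldr j X \in p.1) X) = p.2)) &
      (#|S m| <= 1)%N].

Definition knows (tau r0 : R) (j : nat) (A B : {set V}) : bool :=
  [exists v in A, exists u in B, d v u < rad tau r0 j].

Definition top_level (m : nat) (S : nat -> {set {set V}}) (A : {set V}) : nat :=
  (\max_(j < m.+1 | A \in S j) j)%N.

End Defs.

(* Main.v *)
Require Import Defs.
From HB Require Import structures.
From mathcomp Require Import all_boot all_order all_algebra.
Import Order.TTheory GRing.Theory Num.Theory.
Local Open Scope ring_scope.
Set Implicit Arguments. Unset Strict Implicit. Unset Printing Implicit Defensive.

Lemma K_ge2 (R : realFieldType) (eta : nat) : (2 <= eta)%N -> 2 <= (2 : R) ^+ eta.-1.
Proof.
case: eta => [|[|e]] //= _.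
by rewrite exprS ler_peMr ?exprn_ege1 // ler1n.
Qed.

Lemma tau_ge1 (R : realFieldType) (eta : nat) (tau : R) : (2 <= eta)%N ->
  1 + ((2 : R) ^+ eta.-1 - 1)^-1 <= tau -> 1 <= tau.
Proof.
move=> he ht; apply: le_trans ht; rewrite lerDl invr_ge0 subr_ge0.
by apply: le_trans (K_ge2 R he); rewrite ler1n.
Qed.

Lemma c_eq (R : realFieldType) (eta : nat) (x : R) :
  ((2 : R) ^+ eta.+1)^-1 * (2 * x) = (2 ^+ eta)^-1 * x.
Proof.
by rewrite exprSr invfM mulrA -(mulrA _ _ 2) mulVf ?pnatr_eq0 // mulr1.
Qed.

Lemma step_ineq (R : realFieldType) (eta : nat) (tau x : R) : (2 <= eta)%N ->
  1 + ((2 : R) ^+ eta.-1 - 1)^-1 <= tau -> 0 < x ->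
  x + 2 * ((2 ^+ eta)^-1 * (tau * x)) <= tau * x.
Proof.
move=> he ht x0; set K : R := 2 ^+ eta.-1.
have K2 : 2 <= K by exact: K_ge2.
have K0 : 0 < K by apply: lt_le_trans K2.
have K1 : 0 < K - 1 by rewrite subr_gt0; apply: lt_le_trans K2; rewrite ltr1n.
have eK : (2 : R) ^+ eta = K * 2.
  by rewrite /K -exprSr; case: (eta) he => [|e].
have h1 : K <= tau * (K - 1).
  have := ht; rewrite -(ler_pM2r K1) mulrDl mul1r mulVf ?gt_eqF // subrK.
  by [].
have h2 : 1 + K^-1 * tau <= tau.
  rewrite -(ler_pM2l K0) mulrDr mulr1 mulrA mulfV ?gt_eqF // mul1r.
  by move: h1; rewrite mulrBr mulr1 lerBrDr mulrC.
rewrite eK invfM.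
have -> : 2 * (K^-1 / 2 * (tau * x)) = K^-1 * tau * x.
  by rewrite mulrA (mulrCA 2) mulfV ?pnatr_eq0 // mulr1 mulrA.
rewrite -{1}(mul1r x) -mulrDl ler_pM2r //.
Qed.

Lemma card_bigcup_le (T I : finType) (A : {set I}) (F : I -> {set T}) :
  (#|\bigcup_(i in A) F i| <= \sum_(i in A) #|F i|)%N.
Proof.
apply: (big_ind2 (fun (S : {set T}) n => #|S| <= n)%N) => //.
  by rewrite cards0.
move=> S1 n1 S2 n2 h1 h2; apply: leq_trans (leq_add h1 h2).
exact: (leq_card_setU S1 S2).1.
Qed.

Lemma cover_iter (R : realFieldType) (V : finType) (d : V -> V -> R) lam :
  doubling d lam -> forall k (v : V) (s : R), 0 < s ->
  exists W : {set V}, (#|W| <= lam ^ k)%N /\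
    forall u, d u v < 2 ^+ k * s -> exists2 w, w \in W & d u w < s.
Proof.
move=> hd; elim=> [|k IH] v s s0.
  exists [set v]; split; first by rewrite cards1.
  by move=> u; rewrite expr0 mul1r => h; exists v; rewrite ?inE.
have s2 : 0 < 2 * s by rewrite mulr_gt0.
have [W1 [cW1 hW1]] := IH v _ s2.
pose good (w : V) (W : {set V}) :=
  (#|W| <= lam)%N && [forall u, (d u w < 2 * s) ==> [exists x in W, d u x < s]].
pose f w := odflt set0 [pick W | good w W].
have fP : forall w, good w (f w).
  move=> w; rewrite /f; case: pickP => //= hn.
  have [W [cW hW]] := hd w s s0.
  have := hn W; rewrite /good cW /=; move/negbT/negP; case.
  apply/forallP=> u; apply/implyP=> /hW [x xW dx]; apply/existsP; exists x.
  by rewrite xW.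
exists (\bigcup_(w in W1) f w); split.
  apply: leq_trans (card_bigcup_le W1 f) _.
  apply: (@leq_trans (\sum_(w in W1) lam)%N).
    by apply: leq_sum => w _; case/andP: (fP w).
  by rewrite sum_nat_const expnSr leq_mul2r cW1 orbT.
move=> u; rewrite exprSr -mulrA => /hW1 [w wW1 dw].
have /andP[_ /forallP /(_ u)] := fP w; rewrite dw /= => /existsP [x /andP[xf dx]].
by exists x => //; apply/bigcupP; exists w.
Qed.

Lemma packing (R : realFieldType) (V : finType) (d : V -> V -> R) lam :
  is_metric d -> doubling d lam -> forall k (v : V) (s : R) (P : {set V}), 0 < s ->
  (forall p, p \in P -> d p v < 2 ^+ k * s) ->
  (forall p q, p \in P -> q \in P -> p != q -> 2 * s <= d p q) ->
  (#|P| <= lam ^ k)%N.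
Proof.
move=> [d0 dE dS dT] hd k v s P s0 hP hsep.
have [W [cW hW]] := cover_iter hd k v s0.
pose g p := odflt p [pick w in W | d p w < s].
have gP : forall p, p \in P -> g p \in W /\ d p (g p) < s.
  move=> p pP; rewrite /g; case: pickP => /= [w /andP[-> ->]//|hn].
  have [w wW dw] := hW p (hP p pP).
  by have := hn w; rewrite wW dw.
rewrite -(card_in_imset (f := g)); last first.
  move=> p q pP qP e; apply/eqP; apply/negPn/negP => ne.
  have := hsep p q pP qP ne; apply/negP; rewrite -ltNge.
  have [_ h1] := gP p pP; have [_ h2] := gP q qP.
  apply: le_lt_trans (dT p (g p) q) _.
  have h2' : d (g p) q < s by rewrite dS e.
  by rewrite mulr_natl mulr2n; apply: ltrD.
apply: leq_trans cW; apply: subset_leq_card; apply/subsetP => w /imsetP [p pP ->].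
by have [] := gP p pP.
Qed.

Lemma greedy_props (R : realFieldType) (V : finType) (d : V -> V -> R)
  (hm : is_metric d) (c : R) (hc : 0 < c) vs : forall L ps,
  greedy_run d L c vs = Some ps ->
  [/\ (forall p, p \in ps -> p.2 \in p.1),
      (forall p, p \in ps -> p.1 \subset L),
      (forall p, p \in ps -> forall u, u \in p.1 -> d u p.2 < c),
      (forall u, u \in L -> exists p, p \in ps /\ u \in p.1) &
      ((forall p q u, p \in ps -> q \in ps -> u \in p.1 -> u \in q.1 -> p = q) /\
      (forall p q, p \in ps -> q \in ps -> p != q -> c <= d p.2 q.2))].
Proof.
case: hm => d0 dE dS dT.
have dvv : forall v, d v v = 0 by move=> v; apply/eqP; rewrite dE.
elim: vs => [|v vs IH] L ps /=.
  case: eqP => // -> [<-]; split=> //; by move=> u; rewrite inE.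
case vL: (v \in L) => //.
set P := [set u in L | d u v < c].
case E: (greedy_run d (L :\: P) c vs) => [ps'|] //= [<-].
have [h1 h2 h3 h4 [h5 h6]] := IH _ _ E.
have Pv : v \in P by rewrite inE vL dvv.
have PL : P \subset L by apply/subsetP=> u; rewrite inE => /andP[].
have tl : forall q, q \in ps' -> forall u, u \in q.1 -> u \in L /\ u \notin P.
  move=> q qi u uq; have := subsetP (h2 q qi) u uq; rewrite inE => /andP[-> ->]; by [].
split.
- by move=> p; rewrite inE => /orP[/eqP->//|/h1].
- move=> p; rewrite inE => /orP[/eqP->//|pi]; apply/subsetP=> u /(tl _ pi) [] //.
- move=> p; rewrite inE => /orP[/eqP-> u|pi]; last exact: h3.
  by rewrite /= inE => /andP[].
- move=> u uL; case uP: (u \in P); first by exists (P, v); rewrite inE eqxx.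
  have [q [qi uq]] : exists q, q \in ps' /\ u \in q.1 by apply: h4; rewrite inE uP uL.
  by exists q; rewrite inE qi orbT.
split.
- move=> p q u; rewrite !inE => /orP[/eqP->|pi] /orP[/eqP->|qi] //=.
  + by move=> uP /(tl _ qi) [_ /negP].
  + by move=> /(tl _ pi) [_ /negP] + uP.
  + exact: h5.
- have key : forall q, q \in ps' -> c <= d q.2 v.
    move=> q qi; have [_ nP] := tl _ qi _ (h1 _ qi).
    have qL : q.2 \in L by have [] := tl _ qi _ (h1 _ qi).
    by move: nP; rewrite inE qL /= -leNgt.
  move=> p q; rewrite !inE => /orP[/eqP->|pi] /orP[/eqP->|qi] //=.
  + by rewrite eqxx.
  + by rewrite dS key.
  + by rewrite key.
  + exact: h6.
Qed.

Definition Inv (R : realFieldType) (V : finType) (d : V -> V -> R) (eta : nat) (tau r0 : R)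
  (S : nat -> {set {set V}}) (ldr : nat -> {set V} -> V) (j : nat) : Prop :=
  [/\ forall X, X \in S j -> ldr j X \in X,
      forall X Y x, X \in S j -> Y \in S j -> x \in X -> x \in Y -> X = Y,
      forall v, exists X, X \in S j /\ v \in X,
      forall X x, X \in S j -> x \in X -> 2 * d x (ldr j X) < Defs.rad tau r0 j &
      forall X Y, X \in S j -> Y \in S j -> X != Y ->
         (2 ^+ eta)^-1 * Defs.rad tau r0 j <= d (ldr j X) (ldr j Y)].

Lemma rad_pos (R : realFieldType) (tau r0 : R) j : 0 < tau -> 0 < r0 -> 0 < Defs.rad tau r0 j.
Proof. by move=> t0 r00; rewrite /Defs.rad mulr_gt0 // exprn_gt0. Qed.

Lemma Inv_step (R : realFieldType) (V : finType) (d : V -> V -> R) (eta : nat) (tau r0 : R)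
  (m : nat) (S : nat -> {set {set V}}) (ldr : nat -> {set V} -> V) :
  is_metric d -> (2 <= eta)%N -> 1 + ((2 : R) ^+ eta.-1 - 1)^-1 <= tau -> 0 < r0 ->
  hier_partition d eta tau r0 m S ldr -> forall j, (j < m)%N ->
  Inv d eta tau r0 S ldr j ->
  Inv d eta tau r0 S ldr j.+1 /\
  (forall X, X \in S j -> exists Y, Y \in S j.+1 /\ X \subset Y).
Proof.
move=> hm he ht r00 hp j hjm [i1 i2 i3 i4 i5].
have hm' := hm; case: hm' => d0 dE dS dT.
have t1 := tau_ge1 he ht.
have t0 : 0 < tau by apply: lt_le_trans t1.
case: hp => _ _ hstep _; have [_ [vs [ps [hg [hS hl]]]]] := hstep j hjm.
rewrite c_eq in hg.
set c := (2 ^+ eta)^-1 * Defs.rad tau r0 j.+1 in hg.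
have c0 : 0 < c by rewrite mulr_gt0 ?invr_gt0 ?exprn_gt0 ?rad_pos.
have [g1 g2 g3 g4 [g5 g6]] := greedy_props hm c0 hg.
pose U (p : {set V} * V) := \bigcup_(X in S j | ldr j X \in p.1) X.
have memS : forall Y, Y \in S j.+1 <-> exists2 p, p \in ps & Y = U p.
  move=> Y; rewrite hS inE; split; first by move/mapP.
  by case=> p pi ->; apply/mapP; exists p.
have memU : forall p x, x \in U p <-> exists X, [/\ X \in S j, ldr j X \in p.1 & x \in X].
  move=> p x; split; first by case/bigcupP => X /andP[h1 h2] h3; exists X.
  by case=> X [h1 h2 h3]; apply/bigcupP; exists X => //; rewrite h1.
have hl' : forall p, p \in ps -> ldr j.+1 (U p) = p.2 by exact: hl.
have memL : forall u, u \in leaders S ldr j -> exists X, X \in S j /\ u = ldr j X.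
  by move=> u /imsetP [X h ->]; exists X.
have inL : forall X, X \in S j -> ldr j X \in leaders S ldr j.
  by move=> X h; apply/imsetP; exists X.
split; last first.
  move=> X XS; have [p [pi hp]] := g4 _ (inL _ XS).
  exists (U p); split; first by apply/memS; exists p.
  by apply/subsetP => x xX; apply/memU; exists X.
split.
- move=> Y /memS [p pi ->]; rewrite hl' //.
  have [X [XS e]] := memL _ (subsetP (g2 _ pi) _ (g1 _ pi)).
  by apply/memU; exists X; rewrite -e; split => //; [apply: g1 | rewrite e; apply: i1].
- move=> Y Z x /memS [p pi ->] /memS [q qi ->] /memU [X [XS Xp xX]] /memU [X' [XS' Xq xX']].
  have eX := i2 _ _ _ XS XS' xX xX'; subst X'.
  by rewrite (g5 _ _ _ pi qi Xp Xq).
- move=> v; have [X [XS vX]] := i3 v; have [p [pi hp]] := g4 _ (inL _ XS).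
  exists (U p); split; first by apply/memS; exists p.
  by apply/memU; exists X.
- move=> Y x /memS [p pi ->] /memU [X [XS Xp xX]]; rewrite hl' //.
  have h1 : 2 * d x p.2 <= 2 * (d x (ldr j X) + d (ldr j X) p.2) by rewrite ler_pM2l.
  apply: le_lt_trans h1 _; rewrite mulrDr.
  have h2 : 2 * d x (ldr j X) + 2 * d (ldr j X) p.2 < Defs.rad tau r0 j + 2 * c.
    by rewrite ltrD ?i4 // ltr_pM2l ?g3 //; apply: g3 => //; rewrite inE.
  apply: lt_le_trans h2 _.
  by rewrite /c /Defs.rad exprS -mulrA step_ineq // mulr_gt0 ?exprn_gt0.
- move=> Y Z /memS [p pi ->] /memS [q qi ->] ne; rewrite !hl' //.
  apply: g6 => //; apply: contraNneq ne => ->; by [].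
Qed.

Lemma Inv_base (R : realFieldType) (V : finType) (d : V -> V -> R) (eta : nat) (tau r0 : R)
  (m : nat) (S : nat -> {set {set V}}) (ldr : nat -> {set V} -> V) :
  is_metric d -> 0 < r0 -> (forall u v : V, u != v -> r0 < d u v) ->
  hier_partition d eta tau r0 m S ldr -> Inv d eta tau r0 S ldr 0.
Proof.
move=> [d0 dE dS dT] r00 hsep [hS0 hl0 _ _].
have dvv : forall v, d v v = 0 by move=> v; apply/eqP; rewrite dE.
have memS : forall X, X \in S 0%N -> exists v, X = [set v].
  by move=> X; rewrite hS0 => /imsetP [v _ ->]; exists v.
have r0e : Defs.rad tau r0 0 = r0 by rewrite /Defs.rad expr0 mul1r.
split.
- by move=> X /memS [v ->]; rewrite hl0 inE.
- move=> X Y x /memS [v ->] /memS [w ->]; rewrite !inE => /eqP -> /eqP ->; by [].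
- by move=> v; exists [set v]; rewrite hS0 inE eqxx; split => //; apply/imsetP; exists v.
- move=> X x /memS [v ->]; rewrite inE => /eqP ->; rewrite hl0 dvv mulr0 r0e //.
- move=> X Y /memS [v ->] /memS [w ->] ne; rewrite !hl0 r0e.
  have vw : v != w by apply: contraNneq ne => ->.
  apply: le_trans (ltW (hsep _ _ vw)).
  rewrite ler_pdivrMl ?exprn_gt0 // ler_peMl ?(ltW r00) //; by apply: exprn_ege1; rewrite ler1n.
Qed.

Lemma top_spec (V : finType) (m : nat) (S : nat -> {set {set V}}) (A : {set V}) j0 :
  (j0 <= m)%N -> A \in S j0 ->
  [/\ (top_level m S A <= m)%N, A \in S (top_level m S A) &
      forall j, (j <= m)%N -> A \in S j -> (j <= top_level m S A)%N].
Proof.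
move=> hj0 hA.
have hj0' : (j0 < m.+1)%N by [].
have hmax : forall j, (j <= m)%N -> A \in S j -> (j <= top_level m S A)%N.
  move=> j hj hAj; have hj' : (j < m.+1)%N by [].
  exact: (leq_bigmax_cond (Ordinal hj') hAj).
have [i hi e] : exists2 i : 'I_m.+1, A \in S i & top_level m S A = i.
  rewrite /top_level (bigop.bigmax_eq_arg (Ordinal hj0')) //.
  by case: arg_maxnP => //= i hi _; exists i.
split; first by rewrite e -ltnS.
- by rewrite e.
- by move=> j hj hAj; apply: hmax.
Qed.

Theorem lemma7 (R : realFieldType) (V : finType) (d : V -> V -> R)
  (lam eta : nat) (tau r0 : R) (m : nat)
  (S : nat -> {set {set V}}) (ldr : nat -> {set V} -> V) :
  is_metric d ->
  (2 <= #|V|)%N ->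
  doubling d lam ->
  (2 <= eta)%N ->
  1 + (2 ^+ eta.-1 - 1)^-1 <= tau -> tau <= 2 ^+ eta ->
  0 < r0 -> (forall u v : V, u != v -> r0 < d u v) ->
  hier_partition d eta tau r0 m S ldr ->
  forall (A : {set V}) (j0 : nat), (j0 <= m)%N -> A \in S j0 ->
  (#|[set B : {set V} | (B != A) &&
        [exists j : 'I_m.+1, [&& A \in S j, B \in S j & knows d tau r0 j A B]] &&
        (top_level m S A <= top_level m S B)%N]| <= lam ^ (3 + eta))%N.
Proof.
move=> hm _ hd he ht _ r00 hsep hp A j0 hj0 hA.
have hm' := hm; case: hm' => d0 dE dS dT.
have t1 := tau_ge1 he ht.
have t0 : 0 < tau by apply: lt_le_trans t1.
have InvA : forall j, (j <= m)%N -> Inv d eta tau r0 S ldr j.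
  elim=> [|j IH] hj; first exact: Inv_base hm r00 hsep hp.
  exact: (Inv_step hm he ht r00 hp hj (IH (ltnW hj))).1.
have refine : forall j k X, (j <= k)%N -> (k <= m)%N -> X \in S j ->
    exists Y, Y \in S k /\ X \subset Y.
  move=> j k X hjk; elim: k hjk => [|k IH].
    by rewrite leqn0 => /eqP -> _ hX; exists X.
  rewrite leq_eqVlt => /orP[/eqP <- _ hX|hjk hkm hX]; first by exists X.
  have [Y [YS XY]] := IH hjk (ltnW hkm) hX.
  have [_ h] := Inv_step hm he ht r00 hp hkm (InvA k (ltnW hkm)).
  have [Z [ZS YZ]] := h Y YS; exists Z; split => //; exact: subset_trans XY YZ.
have contig : forall j k l B, (j <= k)%N -> (k <= l)%N -> (l <= m)%N ->
    B \in S j -> B \in S l -> B \in S k.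
  move=> j k l B hjk hkl hlm hBj hBl.
  have [Y [YS BY]] := refine j k B hjk (leq_trans hkl hlm) hBj.
  have [Z [ZS YZ]] := refine k l Y hkl hlm YS.
  have [i1 _ _ _ _] := InvA j (leq_trans hjk (leq_trans hkl hlm)).
  have [_ i2 _ _ _] := InvA l hlm.
  have bB := i1 B hBj.
  have eBZ : B = Z := i2 _ _ _ hBl ZS bB (subsetP YZ _ (subsetP BY _ bB)).
  suff -> : B = Y by [].
  by apply/eqP; rewrite eqEsubset BY; rewrite eBZ.
have [ham hAa hmaxA] := top_spec hj0 hA.
set a := top_level m S A in ham hAa hmaxA *.
have [i1 i2 _ i4 i5] := InvA a ham.
set C := [set B : {set V} | _].
have ra0 : 0 < Defs.rad tau r0 a by rewrite rad_pos.
have hC : forall B, B \in C -> B \in S a /\ d (ldr a B) (ldr a A) < 2 * Defs.rad tau r0 a.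
  move=> B; rewrite inE => /andP[/andP[_ /existsP [j /and3P[hAj hBj hk]]] hab].
  have hja : (j <= a)%N by apply: hmaxA => //; rewrite -ltnS.
  have [hbm hBb _] := top_spec (ltn_ord j : (j <= m)%N) hBj.
  have hBa : B \in S a := contig _ _ _ _ hja hab hbm hBj hBb.
  split => //.
  have [x /andP[xA /existsP [y /andP[yB dxy]]]] := existsP hk.
  have rja : Defs.rad tau r0 j <= Defs.rad tau r0 a.
    by rewrite /Defs.rad ler_pM2r // ler_weXn2l.
  have h1 := i4 _ _ hBa (subsetP (subxx B) _ yB).
  have h3 := i4 _ _ hAa xA.
  have h2 : d y x < Defs.rad tau r0 a by rewrite dS; apply: lt_le_trans dxy rja.
  have e1 : d (ldr a B) (ldr a A) <= d y (ldr a B) + d y x + d x (ldr a A).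
    rewrite (dS y (ldr a B)); apply: le_trans (dT _ y _) _; rewrite -addrA lerD2l.
    exact: dT.
  rewrite -(ltr_pM2l (_ : (0:R) < 2)) //.
  apply: le_lt_trans (_ : 2 * d (ldr a B) (ldr a A) <= 2 * (d y (ldr a B) + d y x + d x (ldr a A))) _.
    by rewrite ler_pM2l.
  rewrite !mulrDr.
  set r := Defs.rad tau r0 a.
  have -> : 2 * (2 * r) = r + 2 * r + r.
    by rewrite !mulr_natl !mulr2n !addrA.
  by rewrite ltrD ?ltrD // ltr_pM2l.
have inj : {in C &, injective (ldr a)}.
  move=> B1 B2 h1 h2 e; have [S1 _] := hC _ h1; have [S2 _] := hC _ h2.
  apply: (i2 _ _ (ldr a B1) S1 S2 (i1 _ S1)); rewrite e; exact: i1.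
rewrite -(card_in_imset inj).
set r := Defs.rad tau r0 a in hC i5 ra0.
have s0 : 0 < ((2 : R) ^+ eta.+1)^-1 * r by rewrite mulr_gt0 ?invr_gt0 ?exprn_gt0.
have hP : forall p, p \in ldr a @: C -> d p (ldr a A) < 2 ^+ eta.+2 * (((2 : R) ^+ eta.+1)^-1 * r).
  move=> p /imsetP [B hB ->]; have [_ h] := hC _ hB.
  by rewrite exprS -mulrA mulVKf // expf_neq0 // pnatr_eq0.
have hS2 : forall p q, p \in ldr a @: C -> q \in ldr a @: C -> p != q ->
    2 * (((2 : R) ^+ eta.+1)^-1 * r) <= d p q.
  move=> p' q' /imsetP [B1 h1 ->] /imsetP [B2 h2 ->] ne.
  rewrite mulrCA c_eq; apply: i5; [exact: (hC _ h1).1 | exact: (hC _ h2).1 |].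
  by apply: contraNneq ne => ->.
apply: leq_trans (packing hm hd s0 hP hS2) _.
case: (lam) => [|l]; first by rewrite !exp0n.
by rewrite leq_pexp2l // addnC addn3.
Qed.
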